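(* Let $K_0$, $L$, $I$ be positive integers with $K_0\ge3$, $L\ge2$ and $I\ge K_0(K_0+1)/2$. Then $$\Theta(K_0,I)\ge\frac{I^2}{2(K_0+1)}\left(1+\frac{(K_0-1)(K_0+1)}{I}-\frac{K_0(K_0+2)(K_0+1)^2}{12I^2}\right).$$
   Context: For $(k,m)\in\mathbb{N}^2$ put $\|(k,m)\|=k+m$. Define $\Theta(K_0,I)=\min\{\|(k_1,m_1)\|+\cdots+\|(k_I,m_I)\|\}$, the minimum taken over all $I$-tuples of pairwise distinct pairs $(k_1,m_1),\dots,(k_I,m_I)\in\mathbb{N}^2$ with $m_1,\dots,m_I\le K_0$ ($\mathbb{N}$ includes $0$). *)

(* Defs.v *)
From mathcomp Require Import all_boot all_order all_algebra.
From mathcomp Require Import boolp.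
Set Implicit Arguments. Unset Strict Implicit. Unset Printing Implicit Defensive.

Definition pnorm (p : nat * nat) : nat := p.1 + p.2.

Definition admissible (K0 I : nat) (s : seq (nat * nat)) : Prop :=
  [/\ size s = I, uniq s & all (fun p => p.2 <= K0) s].

Definition Theta_val (K0 I : nat) : pred nat :=
  fun S => `[< exists s, admissible K0 I s /\ \sum_(p <- s) pnorm p = S >].

Lemma Theta_val_ex K0 I : exists S, Theta_val K0 I S.
Proof.
exists (\sum_(p <- [seq (i, 0) | i <- iota 0 I]) pnorm p).
apply/asboolP; exists [seq (i, 0) | i <- iota 0 I]; split => //; split.
- by rewrite size_map size_iota.
- by rewrite map_inj_uniq ?iota_uniq // => x y [].
- by apply/allP => p /mapP [i _ ->].
Qed.

Definition Theta (K0 I : nat) : nat := ex_minn (Theta_val_ex K0 I).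

(* Main.v *)
Require Import Defs.
From mathcomp Require Import all_boot all_order all_algebra.
From mathcomp Require Import ring lra zify.
From mathcomp Require Import boolp.
Import Order.TTheory GRing.Theory Num.Theory.

Lemma tri_sum x : 2 * \sum_(0 <= k < x) (x - k) = x * x.+1.
Proof.
elim: x => [|x IH]; first by rewrite big_geq.
rewrite big_nat_recl // subn0.
under eq_bigr do rewrite subSS.
rewrite mulnDr IH; ring.
Qed.

Lemma tri_sum_t x t : x <= t -> 2 * \sum_(0 <= k < t) (x - k) = x * x.+1.
Proof.
move=> le; rewrite (@big_cat_nat _ _ _ x 0 t _ _ (leq0n x) le) /=.
rewrite [X in _ + X]big1_seq ?addn0 ?tri_sum // => k /andP[_].
by rewrite mem_index_iota => /andP[h _]; apply/eqP; rewrite subn_eq0.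
Qed.

Definition Bx (t N : nat) := [seq (k, m) | k <- index_iota 0 t, m <- index_iota 0 N].

Lemma key (K0 t : nat) (s : seq (nat * nat)) :
  uniq s -> all (fun p => p.2 <= K0) s ->
  t * size s <= \sum_(p <- s) pnorm p + \sum_(p <- Bx t K0.+1) (t - pnorm p).
Proof.
move=> us hs.
rewrite -sum1_size big_distrr /=.
apply: (@leq_trans (\sum_(p <- s) (pnorm p + (t - pnorm p)))).
  by apply: leq_sum => p _; rewrite muln1 -leq_subLR leqnn.
rewrite big_split /= leq_add2l.
have -> : \sum_(p <- s) (t - pnorm p) = \sum_(p <- s | p.1 < t) (t - pnorm p).
  rewrite [RHS]big_mkcond /=; apply: eq_bigr => p _.
  case: ifP => // /negbT; rewrite -leqNgt => h.
  by apply/eqP; rewrite subn_eq0 /pnorm (leq_trans h) ?leq_addr.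
apply: (@sub_le_big_seq_cond nat addn leq leqnn (fun x y => leq_addr y x) 0 _ s (Bx t K0.+1) (fun p => p.1 < t) xpredT (fun p => t - pnorm p)) => i.
rewrite filter_predT count_uniq_mem ?filter_uniq //.
rewrite [X in _ <= X]count_uniq_mem; last first.
  by rewrite allpairs_uniq ?iota_uniq // => [[a b] [c d]] _ _ /= [-> ->].
case: (boolP (i \in _)) => //= /[!mem_filter] /andP[hi his].
have := allP hs i his => /= hk.
case: i hi hk {his} => a b /= hi hk.
by rewrite lt0b; apply/allpairsP; exists (a, b) => /=; rewrite !mem_index_iota /= hi ltnS hk.
Qed.

Lemma Bsum (K0 u : nat) :
  2 * \sum_(p <- Bx (K0 + u) K0.+1) ((K0 + u) - pnorm p) =
  \sum_(0 <= j < K0.+1) (j + u) * (j + u).+1.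
Proof.
rewrite /Bx big_allpairs exchange_big big_distrr /=.
rewrite big_nat_rev /=.
apply: eq_big_nat => m /andP[_ hm].
rewrite add0n subSS.
have -> : \sum_(i <- index_iota 0 (K0 + u)) (K0 + u - pnorm (i, K0 - m)) =
          \sum_(0 <= i < K0 + u) ((m + u) - i).
  apply: eq_bigr => i _; rewrite /pnorm /=; lia.
by rewrite tri_sum_t //; lia.
Qed.

Local Open Scope ring_scope.

Lemma sum_sq (n u : nat) :
  ((\sum_(0 <= j < n) (j + u) * (j + u).+1)%N%:R : rat) * 6 =
  n%:R * (n%:R - 1) * (2 * n%:R - 1) + 3 * (2 * u%:R + 1) * n%:R * (n%:R - 1)
  + 6 * n%:R * u%:R * (u%:R + 1).
Proof.
elim: n => [|n IH]; first by rewrite big_geq //; ring.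
rewrite big_nat_recr //= natrD mulrDl IH natrM -!natr1 !natrD; ring.
Qed.

Theorem lemma12p2 (K0 L I : nat) :
  (3 <= K0)%N -> (2 <= L)%N -> (0 < I)%N -> (K0 * (K0 + 1) <= 2 * I)%N ->
  ((Theta K0 I)%:R : rat) >=
    (I%:R ^+ 2 / (2 * (K0%:R + 1))) *
    (1 + (K0%:R - 1) * (K0%:R + 1) / I%:R
       - K0%:R * (K0%:R + 2) * (K0%:R + 1) ^+ 2 / (12 * I%:R ^+ 2)).
Proof.
move=> hK _ hI hKI.
rewrite /Theta; case: ex_minnP => S /asboolP [s [[hsz us hs] hS]] _.
set N := K0.+1.
set q := ((2 * I - K0 * N) %/ (2 * N))%N.
set rr := ((2 * I - K0 * N) %% (2 * N))%N.
have hdiv : (2 * I - K0 * N = q * (2 * N) + rr)%N by rewrite /q /rr -divn_eq.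
have hrr : (rr < 2 * N)%N by rewrite /rr ltn_pmod.
have hk := @key K0 (K0 + q) s us hs.
rewrite hsz hS in hk.
have hB := Bsum K0 q.
set W := (\sum_(p <- Bx (K0 + q) K0.+1) (K0 + q - pnorm p))%N in hk hB.
have hW : (W%:R : rat) * 12 = N%:R * (N%:R - 1) * (2 * N%:R - 1) + 3 * (2 * q%:R + 1) * N%:R * (N%:R - 1)
  + 6 * N%:R * q%:R * (q%:R + 1).
  by rewrite -sum_sq -hB natrM; ring.
have hkr : ((K0 + q) * I)%:R <= (S%:R : rat) + W%:R by rewrite -natrD ler_nat.
have hI2 : (2 * I)%:R = (K0 * N)%:R + (q * (2 * N))%:R + (rr%:R : rat).
  by rewrite -!natrD; congr (_%:R); rewrite -addnA -hdiv subnKC // /N -addn1.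
have hrr' : (rr%:R : rat) <= 2 * N%:R.
  by rewrite -natrM ler_nat ltnW.
have hrr0 : (0 : rat) <= rr%:R by [].
rewrite !natrM !natrD in hkr hI2 hrr'.
rewrite /N in hW hI2 hrr'.
have hN : (K0.+1%:R : rat) = K0%:R + 1 by rewrite -natr1.
rewrite hN in hW hI2 hrr'.
set k := (K0%:R : rat) in hW hI2 hrr' hkr *.
set i := (I%:R : rat) in hW hI2 hkr *.
set w := (W%:R : rat) in hW hkr.
set r := (rr%:R : rat) in hI2 hrr' hrr0.
set qq := (q%:R : rat) in hW hI2 hkr.
have k0 : 0 < k by rewrite /k ltr0n; lia.
have i0 : 0 < i by rewrite /i ltr0n.
have hw : w = ((k + 1) * (k + 1 - 1) * (2 * (k + 1) - 1) + 3 * (2 * qq + 1) * (k + 1) * (k + 1 - 1)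
  + 6 * (k + 1) * qq * (qq + 1)) / 12.
  by rewrite -hW mulfK.
have hr : r = 2 * i - k * (k + 1) - qq * (2 * (k + 1)) by rewrite hI2; ring.
have h2 : (k + qq) * i - w <= S%:R by rewrite lerBlDr.
apply: le_trans h2.
rewrite -subr_ge0.
have -> : (k + qq) * i - w -
   i ^+ 2 / (2 * (k + 1)) *
   (1 + (k - 1) * (k + 1) / i - k * (k + 2) * (k + 1) ^+ 2 / (12 * i ^+ 2))
   = r * (2 * (k + 1) - r) / (8 * (k + 1)).
  rewrite hw hr; field.
  by rewrite -/k -/i; apply/andP; split; apply: lt0r_neq0; lra.
apply: divr_ge0; last by lra.
by apply: mulr_ge0 => //; lra.
Qed.
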